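(* Let $m_1,m_2\ge3$ be coprime integers, let $n$ be an even integer divisible by $m_1$, and let $Q\in C(n,m_1,m_2)$ with $Ch_1(Q)\ne0$. Then either $Ch_2(Q)=Ch_3(Q)=0$, or $Ch_2(Q)=Ch_4(Q)=Ch_5(Q)=0$.
   Context: $T_k$ denotes the Chebyshev polynomial of the first kind of degree $k$, $T_k(\cos\phi)=\cos(k\phi)$. Every real polynomial $Q$ of degree $n$ can be uniquely written as $Q=\sum_{k=0}^n d_kT_k$ with $d_k\in\mathbb{R}$; set $Ch_i(Q)=d_{n-i}$ for $0\le i\le n$. $C(n,m_1,m_2)$ denotes the set of real polynomials $Q=\sum_{k=0}^n d_kT_k$ with $d_n\ne0$ and such that $d_k=0$ unless $k$ is divisible by $m_1$ or by $m_2$. *)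

(* Defs.v *)
From HB Require Import structures.
From mathcomp Require Import all_boot all_order all_algebra.
Set Implicit Arguments. Unset Strict Implicit. Unset Printing Implicit Defensive.
Import Order.TTheory GRing.Theory Num.Theory.
Local Open Scope ring_scope.

(* pair (T_k, T_{k+1}) of Chebyshev polynomials of the first kind *)
Fixpoint cheb_pair (R : nzRingType) (k : nat) : {poly R} * {poly R} :=
  match k with
  | O => (1, 'X)
  | S k' => let: (a, b) := cheb_pair R k' in (b, 2%:R *: 'X * b - a)
  end.

Definition cheb (R : nzRingType) (k : nat) : {poly R} := (cheb_pair R k).1.

Definition cheb_expansion (R : nzRingType) (Q : {poly R}) (n : nat) (d : nat -> R) :=
  Q = \sum_(k < n.+1) d k *: cheb R k.

Definition in_C (R : nzRingType) (n m1 m2 : nat) (Q : {poly R}) (d : nat -> R) :=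
  [/\ cheb_expansion Q n d, d n != 0 &
      forall k, (k <= n)%N -> ~~ (m1 %| k)%N -> ~~ (m2 %| k)%N -> d k = 0].

Definition Ch (R : nzRingType) (n : nat) (d : nat -> R) (i : nat) : R := d (n - i)%N.

(* Main.v *)
Require Import Defs.
From HB Require Import structures.
From mathcomp Require Import all_boot all_order all_algebra.
From mathcomp Require Import zify.
Import Order.TTheory GRing.Theory Num.Theory.
Local Open Scope ring_scope.

Lemma dvd_back {a m k : nat} : (a %| m)%N -> (a %| m - k)%N -> (k <= m)%N -> (a %| k)%N.
Proof. move=> h1 h2 hk; have := dvdn_sub h1 h2; by rewrite subKn. Qed.

Lemma dvd_small {a k : nat} : (3 <= a)%N -> (a %| k)%N -> (0 < k)%N -> (3 <= k)%N.
Proof. move=> ha hd hk; have := dvdn_leq hk hd; lia. Qed.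

Theorem corollary3p2 (R : realFieldType) (m1 m2 n : nat) (Q : {poly R}) (d : nat -> R) :
  (3 <= m1)%N -> (3 <= m2)%N -> coprime m1 m2 ->
  ~~ odd n -> (m1 %| n)%N -> (0 < n)%N ->
  in_C n m1 m2 Q d ->
  Ch n d 1 != 0 ->
  (Ch n d 2 = 0 /\ Ch n d 3 = 0) \/ (Ch n d 2 = 0 /\ Ch n d 4 = 0 /\ Ch n d 5 = 0).
Proof.
move=> h1 h2 cop ev dn npos [_ _ Hz]; rewrite /Ch => H1.
have n2 : (2 <= n)%N.
  have : n != 1%N by apply/eqP => e; rewrite e in ev.
  lia.
have m2d : (m2 %| n - 1)%N.
  apply/negPn/negP => nd2; case/negP: H1; apply/eqP; apply: Hz => //; first lia.
  apply/negP => nd1; have h : (m1 %| 1)%N by apply: dvd_back dn nd1 _; lia.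
  have := dvd_small h1 h; lia.
have nge : (3 <= n - 1)%N by apply: (dvd_small h2 m2d); lia.
have C2 : d (n - 2)%N = 0.
  apply: Hz; first lia.
    apply/negP => hd; have h : (m1 %| 2)%N by apply: dvd_back dn hd _; lia.
    have := dvd_small h1 h; lia.
  apply/negP => hd; have e : (n - 1 = (n - 2) + 1)%N by lia.
  have h : (m2 %| 1)%N by apply: (dvd_back (m:=n-1)) => //; [rewrite e addnK | lia].
  have := dvd_small h2 h; lia.
have [m13|m1n3] := eqVneq m1 3%N.
  right; split => //; subst m1.
  have n6 : (6 <= n)%N.
    have : n != 4%N by apply/eqP => e; rewrite e in dn.
    have : n != 5%N by apply/eqP => e; rewrite e in dn.
    have : n != 3%N by apply/eqP => e; rewrite e in ev.
    lia.
  have m2n3 : m2 != 3%N by apply/eqP => e; move: cop; rewrite e.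
  split.
    apply: Hz; first lia.
      apply/negP => hd; have h : (3 %| 4)%N by apply: dvd_back dn hd _; lia.
      by move: h.
    apply/negP => hd; have h3 : (m2 %| 3)%N.
      apply: (dvd_back (m:=n-1) m2d); last lia.
      rewrite (_ : n - 1 - 3 = n - 4)%N //; lia.
    have := dvdn_leq (isT : (0 < 3)%N) h3; lia.
  apply: Hz; first lia.
    apply/negP => hd; have h : (3 %| 5)%N by apply: dvd_back dn hd _; lia.
    by move: h.
  apply/negP => hd; have h4 : (m2 %| 4)%N.
    apply: (dvd_back (m:=n-1) m2d); last lia.
    rewrite (_ : n - 1 - 4 = n - 5)%N //; lia.
  have := dvdn_leq (isT : (0 < 4)%N) h4 => le4.
  have m24 : m2 = 4%N.
    have : m2 != 3%N := m2n3; lia.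
  subst m2; have : (2 %| n - 1)%N by apply: dvdn_trans m2d.
  move: ev; lia.
left; split => //.
apply: Hz; first lia.
  apply/negP => hd; have h : (m1 %| 3)%N by apply: dvd_back dn hd _; lia.
  have := dvdn_leq (isT : (0 < 3)%N) h; move: m1n3 => /eqP; lia.
apply/negP => hd; have h3 : (m2 %| 2)%N.
  apply: (dvd_back (m:=n-1) m2d); last lia.
  rewrite (_ : n - 1 - 2 = n - 3)%N //; lia.
have := dvdn_leq (isT : (0 < 2)%N) h3; lia.
Qed.
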